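(* Let $G=(V,E)$ be a symmetric tree topology with compute nodes $V_C$, and let sets $R,S$ with $|R|\le|S|$ be initially partitioned among the compute nodes, with $N_v$ the number of elements of $R$ and $S$ held by node $v$. Let $E_\beta=\{e\in E:\min\{\sum_{v\in V_e^+}N_v,\sum_{v\in V_e^-}N_v\}\ge|R|\}$ and let $G_\beta$ be the subgraph of $G$ induced by the edge set $E_\beta$. Then $G_\beta$ is a connected tree.
   Context: The network is a directed graph $G=(V,E)$ with compute nodes $V_C\subseteq V$. It is a symmetric tree topology: for every $(u,v)\in E$ also $(v,u)\in E$ with the same bandwidth, and the underlying undirected graph is a tree. For an edge $e=(u,v)$, removing $e$ splits the compute nodes into $V_e^-$ (on $u$'s side) and $V_e^+$ (on $v$'s side). The edge-induced subgraph of $E_\beta$ has as vertices the endpoints of edges in $E_\beta$ and as edges $E_\beta$. *)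

(* Defs.v *)
From mathcomp Require Import all_boot.
Set Implicit Arguments. Unset Strict Implicit. Unset Printing Implicit Defensive.

Section Defs.
Variable V : finType.

Definition connected_on (W : {set V}) (e : rel V) : Prop :=
  forall x y, x \in W -> y \in W ->
    exists p : seq V, [/\ path e x p, last x p = y & all (mem W) p].

Definition acyclic (e : rel V) : Prop :=
  forall c : seq V, 3 <= size c -> ~~ ucycleb e c.

Definition is_tree (E : rel V) : Prop :=
  [/\ irreflexive E, connected_on [set: V] E & acyclic E].

Definition rem_edge (E : rel V) (u v : V) : rel V :=
  fun x y => E x y && ~~ (((x == u) && (y == v)) || ((x == v) && (y == u))).

Definition side_minus (E : rel V) (VC : {set V}) (u v : V) : {set V} :=
  [set w in VC | connect (rem_edge E u v) u w].
Definition side_plus (E : rel V) (VC : {set V}) (u v : V) : {set V} :=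
  [set w in VC | connect (rem_edge E u v) v w].

Definition Nload (TR TS : finType) (locR : TR -> V) (locS : TS -> V) (v : V) : nat :=
  #|[set r | locR r == v]| + #|[set s | locS s == v]|.

Definition Ebeta (E : rel V) (VC : {set V}) (TR TS : finType)
    (locR : TR -> V) (locS : TS -> V) : rel V :=
  fun u v => E u v &&
    (#|TR| <= minn (\sum_(w in side_plus E VC u v) Nload locR locS w)
                   (\sum_(w in side_minus E VC u v) Nload locR locS w)).

Definition endpoints (e : rel V) : {set V} :=
  [set x | [exists y, e x y || e y x]].
End Defs.

(* Main.v *)
Require Import Defs.
From mathcomp Require Import all_boot.
Set Implicit Arguments. Unset Strict Implicit. Unset Printing Implicit Defensive.

Lemma rem_swap (V : finType) (E : rel V) u v : rem_edge E u v =2 rem_edge E v u.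
Proof. by move=> x y; rewrite /rem_edge orbC. Qed.

Lemma rem_sym (V : finType) (E : rel V) u v :
  (forall x y, E x y = E y x) -> symmetric (rem_edge E u v).
Proof.
move=> Es x y; rewrite /rem_edge Es; congr (_ && ~~ _).
by rewrite orbC (andbC (y == u)) (andbC (y == v)).
Qed.

Lemma conn_sym (V : finType) (E : rel V) u v x y :
  (forall x y, E x y = E y x) ->
  connect (rem_edge E u v) x y = connect (rem_edge E u v) y x.
Proof. by move=> Es; apply: sym_connect_sym; apply: rem_sym. Qed.

Lemma tree_sep (V : finType) (E : rel V) a b :
  (forall x y, E x y = E y x) -> irreflexive E -> acyclic E ->
  E a b -> ~~ connect (rem_edge E a b) a b.
Proof.
move=> Es Ei Hac Eab; apply/negP => /connectP [p Hp Hl].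
move: Hl; case: (shortenP Hp) => p' Hp' Hu _ Hl.
case: p' Hp' Hu Hl => [|c [|d q]] Hp' Hu Hl.
- by rewrite /= in Hl; rewrite Hl Ei in Eab.
- rewrite /= in Hl; subst c; move: Hp' => /= /andP [] /andP [] _.
  by rewrite !eqxx.
- have := Hac (a :: c :: d :: q) isT; apply/negP; apply/negPn.
  rewrite /ucycleb Hu andbT /= rcons_path.
  have HE := sub_path (fun x y (h : rem_edge E a b x y) => proj1 (andP h)) Hp'.
  move: HE => /= /andP [-> /andP [-> ->]] /=; rewrite /= in Hl; rewrite -Hl Es; exact: Eab.
Qed.

Lemma conn_restrict (T : finType) (e e' : rel T) x w :
  (forall y y', connect e x y -> e y y' -> e' y y') ->
  connect e x w -> connect e' x w.
Proof.
move=> H /connectP [p Hp ->].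
suff: forall s, connect e x s -> connect e' x s -> path e s p -> connect e' x (last s p).
  by move=> /(_ x (connect0 _ _) (connect0 _ _) Hp).
elim: p {Hp} => [|y p IH] s //= c1 c2 /andP [esy Hp].
apply: IH Hp.
- exact: connect_trans c1 (connect1 esy).
- exact: connect_trans c2 (connect1 (H _ _ c1 esy)).
Qed.

Lemma L1 (V : finType) (E : rel V) u v z w a b :
  connect (rem_edge E u v) u z -> ~~ connect (rem_edge E a b) z v ->
  connect (rem_edge E a b) z w -> connect (rem_edge E u v) u w.
Proof.
move=> Huz Hzv Hzw; apply: connect_trans Huz _.
apply: conn_restrict Hzw => y y' Hzy Hyy'.
have Eyy' : E y y' by case/andP: Hyy'.
rewrite /rem_edge Eyy' /=; apply/negP => /orP [] /andP [] /eqP Hy /eqP Hy'; subst.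
- by move/negP: Hzv; apply; apply: connect_trans Hzy (connect1 Hyy').
- by move/negP: Hzv.
Qed.

Lemma sum_sub (V : finType) (F : V -> nat) (A B : {set V}) :
  A \subset B -> \sum_(w in A) F w <= \sum_(w in B) F w.
Proof.
move=> /subsetP H.
rewrite [X in _ <= X](bigID (mem A)) /=.
apply: leq_trans (leq_addr _ _); apply: eq_leq; apply: eq_bigl => i /=.
by apply/idP/andP => [h|[]//]; split => //; apply: H.
Qed.

Lemma side_swap (V : finType) (E : rel V) VC u v :
  side_plus E VC u v = side_minus E VC v u.
Proof. by apply/setP => w; rewrite !inE (eq_connect (rem_swap E u v)). Qed.

Lemma Eb_sym (V : finType) (E : rel V) VC (TR TS : finType)
    (locR : TR -> V) (locS : TS -> V) x y :
  (forall x y, E x y = E y x) ->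
  Ebeta E VC locR locS x y = Ebeta E VC locR locS y x.
Proof.
move=> Es; rewrite /Ebeta Es side_swap.
have -> : side_minus E VC x y = side_plus E VC y x by rewrite side_swap.
by rewrite minnC.
Qed.

Lemma L2 (V : finType) (E : rel V) VC (TR TS : finType)
    (locR : TR -> V) (locS : TS -> V) u v a b :
  (forall x y, E x y = E y x) -> irreflexive E -> acyclic E ->
  E u v -> Ebeta E VC locR locS a b ->
  ~~ ((a == u) && (b == v) || (a == v) && (b == u)) ->
  connect (rem_edge E u v) u a ->
  #|TR| <= \sum_(w in side_minus E VC u v) Nload locR locS w.
Proof.
move=> Es Ei Hac Euv /andP [Eab]; rewrite leq_min => /andP [Hp Hm] Hne Hua.
case: (boolP (connect (rem_edge E a b) a v)) => Hav.
- have Hbv : ~~ connect (rem_edge E a b) b v.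
    apply/negP => Hbv; move/negP: (tree_sep Es Ei Hac Eab); apply.
    by apply: connect_trans Hav _; rewrite conn_sym.
  have Hub : connect (rem_edge E u v) u b.
    by apply: connect_trans Hua (connect1 _); rewrite /rem_edge Eab.
  apply: leq_trans Hp (sum_sub _ _); apply/subsetP => w; rewrite !inE.
  by case/andP => -> Hbw; apply: L1 Hub Hbv Hbw.
- apply: leq_trans Hm (sum_sub _ _); apply/subsetP => w; rewrite !inE.
  by case/andP => -> Haw; apply: L1 Hua Hav Haw.
Qed.

Definition Aprop (V : finType) (E : rel V) VC (TR TS : finType)
    (locR : TR -> V) (locS : TS -> V) s :=
  forall u v, E u v -> connect (rem_edge E u v) u s ->
   (#|TR| <= \sum_(w in side_minus E VC u v) Nload locR locS w)
   || Ebeta E VC locR locS u v.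

Definition Bprop (V : finType) (E : rel V) VC (TR TS : finType)
    (locR : TR -> V) (locS : TS -> V) s :=
  forall u v, E u v -> connect (rem_edge E u v) v s ->
   (#|TR| <= \sum_(w in side_plus E VC u v) Nload locR locS w)
   || Ebeta E VC locR locS u v.

Lemma A_end (V : finType) (E : rel V) VC (TR TS : finType)
    (locR : TR -> V) (locS : TS -> V) x x' :
  (forall x y, E x y = E y x) -> irreflexive E -> acyclic E ->
  Ebeta E VC locR locS x x' -> Aprop E VC locR locS x.
Proof.
move=> Es Ei Hac Hb u v Euv Hux.
case: (boolP ((x == u) && (x' == v) || (x == v) && (x' == u))) => Hf.
- case/orP: Hf => /andP [/eqP ex /eqP ex']; subst; first by rewrite Hb orbT.
  by rewrite Eb_sym // Hb orbT.
- by rewrite (L2 Es Ei Hac Euv Hb Hf Hux).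
Qed.

Lemma B_of_A (V : finType) (E : rel V) VC (TR TS : finType)
    (locR : TR -> V) (locS : TS -> V) y :
  (forall x y, E x y = E y x) ->
  Aprop E VC locR locS y -> Bprop E VC locR locS y.
Proof.
move=> Es HA u v Euv Hvy.
have := HA v u; rewrite Es Euv => /(_ isT).
rewrite -(eq_connect (rem_swap E u v)) => /(_ Hvy).
by rewrite -side_swap Eb_sym.
Qed.

Lemma A_step (V : finType) (E : rel V) VC (TR TS : finType)
    (locR : TR -> V) (locS : TS -> V) s v :
  (forall x y, E x y = E y x) ->
  Aprop E VC locR locS s -> E s v -> Ebeta E VC locR locS s v ->
  Aprop E VC locR locS v.
Proof.
move=> Es HA Esv Hb u w Euw Huv.
case: (boolP ((v == u) && (s == w) || (v == w) && (s == u))) => Hf.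
- case/orP: Hf => /andP [/eqP ex /eqP ex']; subst; last by rewrite Hb orbT.
  by rewrite Eb_sym // Hb orbT.
- apply: HA Euw _; apply: connect_trans Huv (connect1 _).
  by rewrite /rem_edge Es Esv.
Qed.

Lemma path_Eb (V : finType) (E : rel V) VC (TR TS : finType)
    (locR : TR -> V) (locS : TS -> V) p s :
  (forall x y, E x y = E y x) ->
  uniq (s :: p) -> path E s p -> Aprop E VC locR locS s ->
  Bprop E VC locR locS (last s p) -> path (Ebeta E VC locR locS) s p.
Proof.
move=> Es; elim: p s => [|v p IH] s //= Hu /andP [Esv Hp] HA HB.
have Hsv : Ebeta E VC locR locS s v.
  have hA := HA s v Esv (connect0 _ _).
  have hB : (#|TR| <= \sum_(w in side_plus E VC s v) Nload locR locS w)
            || Ebeta E VC locR locS s v.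
    apply: HB Esv _; apply/connectP; exists p => //.
    apply: (@sub_in_path _ (predC1 s) E) Hp.
      move=> y z /= ys zs Eyz; rewrite /rem_edge Eyz /=.
      by rewrite (negbTE ys) (negbTE zs) !andbF.
    move: Hu; rewrite /= => /andP [].
    rewrite inE negb_or => /andP [sv sp] _.
    rewrite /= eq_sym sv /=; apply/allP => z zp /=.
    by apply/eqP => ez; subst; rewrite zp in sp.
  case/orP: hA => [hA|//]; case/orP: hB => [hB|//].
  by rewrite /Ebeta Esv leq_min hA hB.
rewrite Hsv /=; apply: IH => //.
- by case/andP: Hu.
- exact: A_step HA Esv Hsv.
Qed.

Lemma path_ends (V : finType) (e : rel V) x p :
  path e x p -> all (mem (endpoints e)) p.
Proof.
elim: p x => [|y p IH] x //= /andP [exy Hp]; rewrite (IH y Hp) andbT.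
by rewrite inE; apply/existsP; exists x; rewrite exy orbT.
Qed.

Theorem lemma2 (V : finType) (E : rel V) (VC : {set V})
    (TR TS : finType) (locR : TR -> V) (locS : TS -> V) :
  (forall x y, E x y = E y x) ->
  is_tree E ->
  (forall r, locR r \in VC) ->
  (forall s, locS s \in VC) ->
  #|TR| <= #|TS| ->
  let Eb := Ebeta E VC locR locS in
  connected_on (endpoints Eb) Eb /\ acyclic Eb.
Proof.
move=> Es [Ei Hc Hac] _ _ _ Eb; split.
- move=> x y; rewrite !inE => /existsP [x' Hx] /existsP [y' Hy].
  have Hx' : Eb x x' by case/orP: Hx => // h; rewrite /Eb Eb_sym.
  have Hy' : Eb y y' by case/orP: Hy => // h; rewrite /Eb Eb_sym.
  have [p [Hp Hl _]] := Hc x y (in_setT x) (in_setT y).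
  move: Hl; case: (shortenP Hp) => p' Hp' Hu _ Hl.
  have HP : path Eb x p'.
    apply: path_Eb => //; first exact: A_end Hx'.
    by rewrite Hl; apply: B_of_A => //; apply: A_end Hy'.
  exists p'; split; [exact: HP | by rewrite Hl | exact: (path_ends HP)].
- move=> c Hs; apply/negP => /andP [Hcy Hu].
  move/negP: (Hac c Hs); apply; rewrite /ucycleb Hu andbT.
  by apply: sub_cycle Hcy => a b /andP [].
Qed.
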